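(* In the IM-OCP setting described in the context, with $r_1\in[0,B]$ and any non-increasing sequence of positive step sizes $(\eta_t)_{t\ge1}$, for every $T\ge1$, $$\overline{\mathrm{Reg}}(T):=\mathbb{E}\left[\sum_{i=1}^T\ell_{1-\alpha}(r_i,r_i^* )\frac{\mathrm{obs}_i}{p_i}\right]-\min_{u\in\mathbb{R}}\sum_{i=1}^T\ell_{1-\alpha}(u,r_i^* )\le\frac{\mathbb{E}[D_T]}{\eta_T}+\frac{1}{2\mu\,p_{\min}}\sum_{i=1}^T\eta_i,$$ where $p_{\min}=\min_{t\in\{1,\dots,T\}}p_t$, $D_T=\max_{t\in\{1,\dots,T\}}\mathcal{B}_R\big(q_\alpha(r^*_{1:T}),r_t\big)$, and expectations are over the feedback indicators $(\mathrm{obs}_t)$.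
   Context: Fix $\alpha\in(0,1)$ and $B>0$. Let $(r_t^* )_{t\ge1}$ be an arbitrary deterministic sequence of scores with $r_t^*\in[0,B]$. Given thresholds $r_t$, the miscoverage indicator is $E_t=\mathbb{1}\{r_t^*>r_t\}$. The quantile loss is $\ell_{1-\alpha}(r,r^* )=(\alpha-\mathbb{1}\{r<r^*\})(r-r^* )$, and $q_\alpha(r^*_{1:T})$ denotes a minimizer over $u\in\mathbb{R}$ of $\sum_{t=1}^T\ell_{1-\alpha}(u,r_t^* )$. Let $P$ be a probability distribution on $[0,B]$ with bounded density, $\sigma>0$, and $R(r)=\mathbb{E}_{r^*\sim P}[\ell_{1-\alpha}(r,r^* )]+\frac{\sigma}{2}r^2$; $R$ is differentiable and $\nabla R$ is a continuous strictly increasing bijection of $\mathbb{R}$. Let $\mu>0$ be a constant such that $R$ is $\mu$-strongly convex (e.g. $\mu=\sigma$). The Bregman divergence of $R$ is $\mathcal{B}_R(u,v)=R(u)-R(v)-\nabla R(v)(u-v)$. Feedback: $p_t\in(0,1]$ and $(\mathrm{obs}_t)_{t\ge1}$ are independent Bernoulli random variables with $\Pr(\mathrm{obs}_t=1)=p_t$. IM-OCP: given $r_1$ and step sizes $\eta_t>0$, for $t\ge2$ the threshold $r_t$ is defined by $$\nabla R(r_t)=\nabla R(r_{t-1})-\eta_{t-1}(\alpha-E_{t-1})\frac{\mathrm{obs}_{t-1}}{p_{t-1}}.$$ *)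

(* Defs.v *)
From HB Require Import structures.
From mathcomp Require Import all_boot all_order all_algebra.
From mathcomp Require Import all_classical all_reals all_analysis.
Set Implicit Arguments. Unset Strict Implicit. Unset Printing Implicit Defensive.
Import Order.TTheory GRing.Theory Num.Theory.
Import numFieldNormedType.Exports.
Local Open Scope classical_set_scope.
Local Open Scope ring_scope.

Section Defs.
Variable R : realType.

Definition qloss (alpha r rs : R) : R := (alpha - (if r < rs then 1 else 0)) * (r - rs).

Definition bounded_density_on (B : R) (P : probability R R) : Prop :=
  P `[0, B]%classic = 1%E /\
  exists (f : R -> R) (M : R),
    measurable_fun setT f /\ (forall x, 0 <= f x <= M) /\
    forall A : set R, measurable A ->
      P A = (\int[@lebesgue_measure R]_(x in A) (f x)%:E)%E.

Definition regR (alpha sigma : R) (P : probability R R) (r : R) : R :=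
  fine (\int[P]_x (qloss alpha r x)%:E)%E + sigma / 2 * r ^+ 2.

Definition strongly_convex (mu : R) (f : R -> R) : Prop :=
  forall (x y l : R), 0 <= l <= 1 ->
    f (l * x + (1 - l) * y) <=
      l * f x + (1 - l) * f y - mu / 2 * l * (1 - l) * (x - y) ^+ 2.

Definition bregman (f : R -> R) (u v : R) : R :=
  f u - f v - derive1 f v * (u - v).

(* Expectation over independent Bernoulli feedback indicators obs_1..obs_T,
   Pr(obs_t = 1) = p_t.  An outcome w : {ffun 'I_T -> bool} gives
   obs_t = w (t-1) for 1 <= t <= T (and obs_t = false otherwise, irrelevant
   for quantities depending only on obs_1..obs_T). *)
Definition obs_of (T : nat) (w : {ffun 'I_T -> bool}) (t : nat) : bool :=
  match insub t.-1 with
  | Some i => if (1 <= t)%N then w i else false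
  | None => false
  end.

Definition bern_weight (T : nat) (p : nat -> R) (w : {ffun 'I_T -> bool}) : R :=
  \prod_(i < T) (if w i then p i.+1 else 1 - p i.+1).

Definition bern_expect (T : nat) (p : nat -> R) (X : (nat -> bool) -> R) : R :=
  \sum_(w : {ffun 'I_T -> bool}) bern_weight p w * X (obs_of w).

End Defs.

(* Main.v *)
Require Import Defs.
From HB Require Import structures.
From mathcomp Require Import all_boot all_order all_algebra.
From mathcomp Require Import all_classical all_reals all_analysis.
From mathcomp Require Import ring lra.
Import Order.TTheory GRing.Theory Num.Theory.
Import numFieldNormedType.Exports.
Local Open Scope classical_set_scope.
Local Open Scope ring_scope.

Lemma tangent (R : realType) (f : R -> R) mu a b :
  (forall x, derivable f x 1) -> strongly_convex mu f ->
  f a + derive1 f a * (b - a) + mu / 2 * (b - a) ^+ 2 <= f b.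
Proof.
move=> der sc.
have df : differentiable f a by apply/derivable1_diffP.
set v := b - a.
have Dv : 'D_v f a = v * derive1 f a.
  rewrite derive1E !deriveE //.
  rewrite -{1}(mulr1 v) -[v * 1]/(v *: (1:R)) linearZ /=. by [].
have cv : (fun h => h^-1 *: ((f \o shift a) (h *: v) - f a)) @ 0^' --> 'D_v f a.
  have dv : derivable f a v by apply: diff_derivable. exact: dv.
have cv' : (fun h => h^-1 *: ((f \o shift a) (h *: v) - f a)) @ 0^'+ --> 'D_v f a.
  apply: cvg_trans cv; apply: cvg_app; apply: within_subset => x /= x0.
  by rewrite gt_eqF.
have cg : (fun h : R => f b - f a - mu / 2 * v ^+ 2 + (mu / 2 * v ^+ 2) * h) @ 0^'+ -->
          f b - f a - mu / 2 * v ^+ 2.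
  rewrite -[X in _ --> X]addr0. apply: cvgD; first exact: cvg_cst.
  rewrite -[X in _ --> X](mulr0 (mu / 2 * v ^+ 2)). apply: cvgMr.
  apply: cvg_at_right_filter. exact: cvg_id.
have := ler_cvg_to cv' cg.
rewrite Dv => H.
have : v * derive1 f a <= f b - f a - mu / 2 * v ^+ 2.
  apply: H; near=> h.
  have h0 : 0 < h by near: h; exact: nbhs_right_gt.
  have h1 : h < 1 by near: h; exact: nbhs_right_lt.
  rewrite /= -[_ *: _]/(h^-1 * _) ler_pdivrMl //.
  have := sc b a h; rewrite (ltW h0) (ltW h1) => /(_ isT).
  have -> : h *: v + a = h * b + (1 - h) * a by rewrite /v -[_ *: _]/(h * _); ring.
  have -> : h * (f b - f a - mu / 2 * v ^+ 2 + mu / 2 * v ^+ 2 * h) =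
     h * f b + (1 - h) * f a - mu / 2 * h * (1 - h) * (b - a) ^+ 2 - f a by rewrite /v; ring.
  lra.
rewrite mulrC; lra.
Unshelve. all: end_near.
Qed.
Section E.
Variables (R : realType) (T : nat) (p : nat -> R).
Hypothesis hp : forall t, (1 <= t)%N -> 0 < p t <= 1.

Lemma weight_ge0 (w : {ffun 'I_T -> bool}) : 0 <= bern_weight p w.
Proof.
apply: prodr_ge0 => i _; have /andP[p0 p1] := @hp i.+1 (ltn0Sn i).
case: (w i); lra.
Qed.

Lemma E_mono (X Y : (nat -> bool) -> R) :
  (forall obs, X obs <= Y obs) -> bern_expect T p X <= bern_expect T p Y.
Proof.
move=> XY; apply: ler_sum => w _; apply: ler_wpM2l; [exact: weight_ge0|exact: XY].
Qed.

Lemma E_add (X Y : (nat -> bool) -> R) :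
  bern_expect T p (fun o => X o + Y o) = bern_expect T p X + bern_expect T p Y.
Proof. by rewrite /bern_expect -big_split; apply: eq_bigr => w _; rewrite mulrDr. Qed.

Lemma E_scale (c : R) (X : (nat -> bool) -> R) :
  bern_expect T p (fun o => c * X o) = c * bern_expect T p X.
Proof. by rewrite /bern_expect mulr_sumr; apply: eq_bigr => w _; rewrite mulrCA. Qed.

Lemma E_sum (F : nat -> (nat -> bool) -> R) m n :
  bern_expect T p (fun o => \sum_(m <= i < n) F i o) =
  \sum_(m <= i < n) bern_expect T p (F i).
Proof.
rewrite /bern_expect; under eq_bigr do rewrite mulr_sumr.
exact: exchange_big.
Qed.

Lemma E_const (c : R) : bern_expect T p (fun _ => c) = c.
Proof.
rewrite /bern_expect -mulr_suml.
suff -> : \sum_(w : {ffun 'I_T -> bool}) bern_weight p w = 1 by rewrite mul1r.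
rewrite /bern_weight.
rewrite -(bigA_distr_bigA (fun (i : 'I_T) (b : bool) => if b then p i.+1 else 1 - p i.+1)).
rewrite big1 // => i _; rewrite big_bool /=; ring.
Qed.

Lemma obs_ofE (w : {ffun 'I_T -> bool}) (j : 'I_T) : obs_of w j.+1 = w j.
Proof.
rewrite /obs_of /=; case: insubP => [k _ kj|]; last by rewrite ltn_ord.
by rewrite (_ : k = j) //; apply: val_inj.
Qed.

Lemma E_obs i : (1 <= i <= T)%N ->
  bern_expect T p (fun o => if o i then 1 else 0) = p i.
Proof.
case: i => // i /andP[_ iT].
pose j : 'I_T := Ordinal iT.
rewrite /bern_expect /bern_weight.
rewrite (eq_bigr (fun w : {ffun 'I_T -> bool} =>
   \prod_(i0 < T) ((if w i0 then p i0.+1 else 1 - p i0.+1) *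
                   (if i0 == j then (if w i0 then 1 else 0) else 1)))); last first.
  move=> w _; rewrite big_split /=; congr (_ * _).
  rewrite -big_mkcond big_pred1_eq.
  by rewrite (_ : i.+1 = j.+1) // obs_ofE.
rewrite -(bigA_distr_bigA (fun (i0 : 'I_T) (b : bool) =>
   (if b then p i0.+1 else 1 - p i0.+1) *
                   (if i0 == j then (if b then 1 else 0) else 1))) /=.
rewrite (bigD1 j) //= big_bool /= eqxx big1 ?mulr1; first ring.
move=> k kj; rewrite big_bool /= (negbTE kj); ring.
Qed.

End E.

Lemma E_w (R : realType) (T : nat) (p : nat -> R) (a : nat -> R) :
  (forall t, (1 <= t)%N -> 0 < p t <= 1) ->
  bern_expect T p (fun o => \sum_(1 <= i < T.+1) a i * ((if o i then 1 else 0) / p i))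
  = \sum_(1 <= i < T.+1) a i.
Proof.
move=> hp; rewrite E_sum; rewrite big_seq_cond [RHS]big_seq_cond.
apply: eq_bigr => i /andP[]; rewrite mem_index_iota => /andP[i1 iT] _.
rewrite (_ : (fun o : nat -> bool => _) = fun o => (a i / p i) * (if o i then 1 else 0)); last first.
  by apply: funext => o /=; case: (o i); rewrite ?mul0r ?mulr0 ?mul1r ?mulr1.
rewrite (@E_scale R T p _ (fun o => if o i then 1 else 0)) E_obs //; last by rewrite i1.
have /andP[p0 _] := hp i i1.
by rewrite -mulrA mulVf ?gt_eqF // mulr1.
Qed.
Lemma qloss_lin (R : realType) (alpha x q s w : R) : 0 < alpha < 1 -> 0 <= w ->
  (qloss alpha x s - qloss alpha q s) * w <=
  ((alpha - (if x < s then 1 else 0)) * w) * (x - q).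
Proof.
move=> /andP[a0 a1] w0; rewrite mulrAC; apply: ler_wpM2r => //.
rewrite /qloss; case: ifP => xs; case: ifP => qs; nra.
Qed.

Lemma step (R : realType) (f : R -> R) mu q a b e g : 0 < mu ->
  f a + derive1 f a * (b - a) + mu / 2 * (b - a) ^+ 2 <= f b ->
  derive1 f b = derive1 f a - e * g ->
  e * g * (a - q) <= bregman f q a - bregman f q b + (e * g) ^+ 2 / (2 * mu).
Proof.
move=> mu0 tg upd; rewrite /bregman upd.
set G := e * g; set D := derive1 f a.
have key : mu / 2 * (b - a) ^+ 2 - G * (a - b) + G ^+ 2 / (2 * mu) =
   (mu * (a - b) - G) ^+ 2 / (2 * mu) by field; rewrite gt_eqF.
have : 0 <= (mu * (a - b) - G) ^+ 2 / (2 * mu).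
  by apply: divr_ge0; [exact: sqr_ge0| lra].
rewrite -key => H.
have E : f q - f a - D * (q - a) - (f q - f b - (D - G) * (q - b)) + G ^+ 2 / (2 * mu)
   - G * (a - q) = (f b - f a - D * (b - a)) - G * (a - b) + G ^+ 2 / (2 * mu) by ring.
have tg' : 0 <= f b - f a - D * (b - a) - mu / 2 * (b - a) ^+ 2.
  rewrite subr_ge0 lerBrDl; move: tg; rewrite /D; lra.
rewrite -subr_ge0 E.
rewrite (_ : _ - _ + _ = (f b - f a - D * (b - a) - mu / 2 * (b - a) ^+ 2) +
   (mu / 2 * (b - a) ^+ 2 - G * (a - b) + G ^+ 2 / (2 * mu))); last by ring.
exact: addr_ge0.
Qed.

Lemma combine (R : realType) (alpha eta c x Bi Bj mu pp : R) (o : bool) :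
  0 < alpha < 1 -> 0 < eta -> 0 < mu -> 0 < pp ->
  c = alpha - 1 \/ c = alpha ->
  eta * (c * ((if o then 1 else 0) / pp)) * x <=
     Bi - Bj + (eta * (c * ((if o then 1 else 0) / pp))) ^+ 2 / (2 * mu) ->
  (c * ((if o then 1 else 0) / pp)) * x <=
     (Bi - Bj) / eta + eta / (pp * (2 * mu)) * ((if o then 1 else 0) / pp).
Proof.
move=> /andP[a0 a1] e0 mu0 p0 hc.
have gb : (c * ((if o then 1 else 0) / pp)) ^+ 2 <= (if o then 1 else 0) / pp / pp.
  case: o; last by rewrite !mul0r mulr0 expr0n.
  rewrite mul1r exprMn -[X in _ <= X]mul1r -mulrA -expr2.
  rewrite mulrA -expr2; apply: ler_wpM2r; first exact: sqr_ge0.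
  case: hc => ->; nra.
set g := c * _ => H.
have H2 : g * x <= (Bi - Bj) / eta + eta * g ^+ 2 / (2 * mu).
  rewrite (_ : _ + _ = eta^-1 * (Bi - Bj + (eta * g) ^+ 2 / (2 * mu))); last first.
    by field; rewrite ?gt_eqF //; lra.
  by rewrite ler_pdivlMl // mulrA.
apply: (le_trans H2); rewrite lerD2l.
rewrite (_ : eta * g ^+ 2 / (2 * mu) = eta / (2 * mu) * g ^+ 2); last by ring.
rewrite (_ : eta / (pp * (2 * mu)) * _ = eta / (2 * mu) * ((if o then 1 else 0) / pp / pp)); last first.
  by field; rewrite ?gt_eqF //; lra.
apply: ler_wpM2l => //; apply: divr_ge0; lra.
Qed.

Lemma telescope (R : realType) (Bf eta : nat -> R) (D : R) n :
  (1 <= n)%N ->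
  (forall t, (1 <= t)%N -> 0 < eta t) ->
  (forall s t, (1 <= s)%N -> (s <= t)%N -> eta t <= eta s) ->
  (forall t, (1 <= t <= n)%N -> Bf t <= D) ->
  \sum_(1 <= t < n.+1) (Bf t - Bf t.+1) / eta t <= D / eta n - Bf n.+1 / eta n.
Proof.
move=> + he hmono; elim: n => [//|n IH] _ hD.
case: n IH hD => [|n] IH hD.
  rewrite big_nat1 mulrBl lerD2r; apply: ler_wpM2r.
    by rewrite invr_ge0 ltW // he.
  exact: hD.
rewrite big_nat_recr //=.
have := IH isT (fun t ht => hD t (ltac:(move: ht => /andP[h1 h2]; apply/andP; split => //; exact: leqW))).
move=> H.
have e1 := he n.+1 isT; have e2 := he n.+2 isT.
have dB : 0 <= D - Bf n.+2 by rewrite subr_ge0; apply: hD; rewrite /= leqnn.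
have ie : (eta n.+1)^-1 <= (eta n.+2)^-1.
  by rewrite lef_pV2 ?posrE //; apply: hmono.
have := ler_wpM2l dB ie.
move=> H2; rewrite mulrBl; rewrite !mulrBl in H2.
lra.
Qed.

Local Close Scope classical_set_scope.

Theorem theorem2 (R : realType) (alpha B sigma mu : R) (P : probability R R)
  (rstar : nat -> R) (p : nat -> R) (eta : nat -> R) (r1 : R)
  (r : (nat -> bool) -> nat -> R) (T : nat) (q : R) :
  0 < alpha < 1 -> 0 < B ->
  bounded_density_on B P -> 0 < sigma ->
  (forall x, derivable (regR alpha sigma P) x 1) ->
  0 < mu -> strongly_convex mu (regR alpha sigma P) ->
  (forall t, (1 <= t)%N -> 0 <= rstar t <= B) ->
  (forall t, (1 <= t)%N -> 0 < p t <= 1) ->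
  (forall t, (1 <= t)%N -> 0 < eta t) ->
  (forall s t, (1 <= s)%N -> (s <= t)%N -> eta t <= eta s) ->
  0 <= r1 <= B ->
  (* IM-OCP thresholds, as functions of the feedback sequence obs *)
  (forall obs, r obs 1%N = r1) ->
  (forall obs t, (2 <= t)%N ->
     derive1 (regR alpha sigma P) (r obs t) =
     derive1 (regR alpha sigma P) (r obs t.-1)
     - eta t.-1 * (alpha - (if r obs t.-1 < rstar t.-1 then 1 else 0))
         * ((if obs t.-1 then 1 else 0) / p t.-1)) ->
  (1 <= T)%N ->
  (* q = q_alpha(r*_{1:T}) : a minimizer of the cumulative quantile loss *)
  (forall u, \sum_(1 <= i < T.+1) qloss alpha q (rstar i)
             <= \sum_(1 <= i < T.+1) qloss alpha u (rstar i)) ->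
  bern_expect T p (fun obs =>
      \sum_(1 <= i < T.+1) qloss alpha (r obs i) (rstar i) * ((if obs i then 1 else 0) / p i))
  - \sum_(1 <= i < T.+1) qloss alpha q (rstar i)
  <= bern_expect T p (fun obs =>
        \big[Num.max/bregman (regR alpha sigma P) q (r obs 1%N)]_(1 <= t < T.+1)
           bregman (regR alpha sigma P) q (r obs t)) / eta T
     + (2 * mu * \big[Num.min/p 1%N]_(1 <= t < T.+1) p t)^-1
       * \sum_(1 <= i < T.+1) eta i.
Proof.
move=> ha hB hP hs hder hmu hsc hrs hp heta hmono hr1 hr1' hupd hT hq.
set f := regR alpha sigma P.
have tg : forall a b, f a + derive1 f a * (b - a) + mu / 2 * (b - a) ^+ 2 <= f b.
  by move=> a b; exact: tangent.
have bg0 : forall a b, 0 <= bregman f a b.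
  move=> a b; have := tg b a; rewrite /bregman.
  have : 0 <= mu / 2 * (a - b) ^+ 2 by apply: mulr_ge0; [lra|exact: sqr_ge0].
  lra.
set pmin := \big[Num.min/p 1%N]_(1 <= t < T.+1) p t.
have pmin0 : 0 < pmin.
  rewrite /pmin big_seq; apply: (big_ind (fun x => 0 < x)).
  - by have /andP[] := hp 1%N isT.
  - by move=> x y x0 y0; rewrite lt_min x0 y0.
  - by move=> i; rewrite mem_index_iota => /andP[i1 _]; have /andP[] := hp i i1.
have pminle : forall i, (1 <= i <= T)%N -> pmin <= p i.
  by move=> i hi; apply: ge_bigmin_seq => //; rewrite mem_index_iota ltnS.
pose w (o : nat -> bool) i := (if o i then 1 else 0) / p i.
pose S o := \sum_(1 <= i < T.+1) (eta i / (p i * (2 * mu))) * w o i.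
pose Q' o := \sum_(1 <= i < T.+1) qloss alpha q (rstar i) * w o i.
pose D o := \big[Num.max/bregman f q (r o 1%N)]_(1 <= t < T.+1) bregman f q (r o t).
have per : forall o,
   \sum_(1 <= i < T.+1) qloss alpha (r o i) (rstar i) * ((if o i then 1 else 0) / p i)
   <= Q' o + (D o / eta T + S o).
  move=> o.
  have hterm : forall i, (1 <= i <= T)%N ->
     (qloss alpha (r o i) (rstar i) - qloss alpha q (rstar i)) * w o i <=
     (bregman f q (r o i) - bregman f q (r o i.+1)) / eta i
       + eta i / (p i * (2 * mu)) * w o i.
    move=> i /andP[i1 iT]; have /andP[p0 p1] := hp i i1.
    apply: le_trans; first apply: qloss_lin => //.
      by rewrite /w; case: (o i); rewrite ?mul0r ?mul1r // invr_ge0 ltW.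
    apply: (@combine R alpha) => //; first exact: heta.
      by case: ifP => _; [left|right]; rewrite ?subr0.
    apply: step => //.
    by have H := hupd o i.+1 i1; rewrite /= -mulrA in H; exact: H.
  have H1 : \sum_(1 <= i < T.+1) qloss alpha (r o i) (rstar i) * ((if o i then 1 else 0) / p i)
     - Q' o <= \sum_(1 <= i < T.+1) ((bregman f q (r o i) - bregman f q (r o i.+1)) / eta i)
       + S o.
    rewrite /Q' /S -sumrB -big_split /= big_seq_cond [X in _ <= X]big_seq_cond.
    apply: ler_sum => i /andP[]; rewrite mem_index_iota ltnS => hi _.
    by rewrite -mulrBl; exact: hterm.
  have H2 := @telescope R (fun t => bregman f q (r o t)) eta (D o) T hT heta hmono.
  have H3 : \sum_(1 <= t < T.+1)
       (bregman f q (r o t) - bregman f q (r o t.+1)) / eta t <=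
       D o / eta T - bregman f q (r o T.+1) / eta T.
    apply: H2 => t ht; rewrite /D /=.
    by apply: (@le_bigmax_seq _ _ nat); rewrite // mem_index_iota ltnS.
  have H4 : 0 <= bregman f q (r o T.+1) / eta T.
    by apply: divr_ge0 => //; apply: ltW; apply: heta.
  lra.
apply: le_trans (_ : bern_expect T p (fun o => Q' o + (D o / eta T + S o))
                      - \sum_(1 <= i < T.+1) qloss alpha q (rstar i) <= _).
  by rewrite lerD2r; apply: E_mono.
rewrite E_add E_add.
rewrite (_ : bern_expect T p Q' = \sum_(1 <= i < T.+1) qloss alpha q (rstar i));
  last exact: E_w.
rewrite (_ : bern_expect T p S = \sum_(1 <= i < T.+1) eta i / (p i * (2 * mu)));
  last exact: E_w.
rewrite (_ : (fun o => D o / eta T) = (fun o => (eta T)^-1 * D o)); last first.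
  by apply: funext => o; rewrite mulrC.
rewrite (@E_scale R T p _ D) addrAC subrr add0r mulrC lerD2l.
rewrite mulr_sumr; rewrite big_seq_cond [X in _ <= X]big_seq_cond.
apply: ler_sum => i /andP[]; rewrite mem_index_iota ltnS => /andP[i1 iT] _.
have /andP[p0 _] := hp i i1; have e0 := heta i i1.
rewrite mulrC; apply: ler_wpM2r; first exact: ltW.
rewrite lef_pV2 ?posrE; try (apply: mulr_gt0; lra).
rewrite mulrC; apply: ler_wpM2r; first lra.
by apply: pminle; rewrite i1.
Qed.
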